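(* Let $n,k$ be integers with $1\le k\le n<2k$ and set $\delta_k=\frac{1}{3k}$. There is a constant $M_0$ depending only on $n,k$ such that for every $\kappa=(\kappa_1,\dots,\kappa_n)\in\Gamma_k$ whose maximum entry $\kappa_1$ satisfies $\kappa_1\ge M_0$, and all indices $i\ne l$, $$(2-\delta_k)e^{\kappa_l}\sigma_{k-2}(\kappa|il)+(2-\delta_k)\frac{e^{\kappa_l}-e^{\kappa_i}}{\kappa_l-\kappa_i}\sigma_{k-1}(\kappa|l)\ge\frac{e^{\kappa_l}}{\kappa_1}\sigma_{k-1}(\kappa|i).$$
   Context: $\sigma_m$ is the $m$-th elementary symmetric function ($\sigma_0=1$, $\sigma_m=0$ for $m<0$); $\Gamma_k=\{\kappa\in\mathbb{R}^n:\sigma_m(\kappa)>0,\ m=1,\dots,k\}$; $(\kappa|ab)$ denotes $\kappa$ with the entries of indices $a,b$ deleted and $\sigma_m(\kappa|ab)=\sigma_m((\kappa|ab))$. When $\kappa_l=\kappa_i$, the difference quotient $\frac{e^{\kappa_l}-e^{\kappa_i}}{\kappa_l-\kappa_i}$ is interpreted as its limit $e^{\kappa_i}$. *)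

(* Defs.v *)
From HB Require Import structures.
From mathcomp Require Import all_boot all_order all_algebra.
From mathcomp Require Import all_classical all_reals all_analysis.
Set Implicit Arguments. Unset Strict Implicit. Unset Printing Implicit Defensive.
Import Order.TTheory GRing.Theory Num.Theory.
Local Open Scope ring_scope.

Definition esym_on {R : realType} {n : nat} (m : int) (kappa : 'I_n -> R)
  (S : {set 'I_n}) : R :=
  match m with
  | Posz m' => \sum_(A : {set 'I_n} | (A \subset S) && (#|A| == m'))
                 \prod_(j in A) kappa j
  | Negz _ => 0
  end.

Definition sigma {R : realType} {n : nat} (m : int) (kappa : 'I_n -> R) : R :=
  esym_on m kappa [set: 'I_n].

Definition sigma1 {R : realType} {n : nat} (m : int) (kappa : 'I_n -> R)
  (a : 'I_n) : R := esym_on m kappa [set~ a].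

Definition sigma2 {R : realType} {n : nat} (m : int) (kappa : 'I_n -> R)
  (a b : 'I_n) : R := esym_on m kappa (~: [set a; b]).

Definition in_Gamma {R : realType} {n : nat} (k : nat) (kappa : 'I_n -> R) : Prop :=
  forall m : nat, (1 <= m <= k)%N -> 0 < sigma m%:Z kappa.

(* (e^a - e^b)/(a - b), interpreted as e^b when a = b *)
Definition exp_dq {R : realType} (a b : R) : R :=
  if a == b then expR b else (expR a - expR b) / (a - b).

(* Main.v *)
Require Import Defs.
From HB Require Import structures.
From mathcomp Require Import all_boot all_order all_algebra.
From mathcomp Require Import all_classical all_reals all_analysis.
From mathcomp Require Import polyorder polyrcf zify.
From mathcomp.algebra_tactics Require Import ring lra.
Import Order.TTheory GRing.Theory Num.Theory.
Local Open Scope ring_scope.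

Section PolyPart.
Variable R : realType.

Definition PX (r : seq R) : {poly R} := \prod_(x <- r) ('X - x%:P).
Definition splitp (p : {poly R}) := exists (c : R) (r : seq R), p = c *: PX r.

Lemma PX_neq0 r : PX r != 0.
Proof. by rewrite monic_neq0 // monic_prod_XsubC. Qed.

Lemma dvd_count (s : seq R) (f : {poly R}) : f != 0 ->
  (forall x, (count_mem x s <= mup x f)%N) -> PX s %| f.
Proof.
elim: s f => [|y s IH] f fN0 hc; first by rewrite /PX big_nil dvd1p.
have : (0 < mup y f)%N by apply: leq_trans (hc y); rewrite /= eqxx.
rewrite -XsubC_dvd // => /dvdpP [g fE].
have gN0 : g != 0 by apply: contraNneq fN0 => g0; rewrite fE g0 mul0r.
have hg : forall x, (count_mem x s <= mup x g)%N.
  move=> x; have := hc x; rewrite fE mupM ?polyXsubC_eq0 //.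
  have := @mup_XsubCX _ 1 x y; rewrite expr1 => ->.
  by rewrite /= eq_sym; case: (x == y); rewrite ?addn1 ?addn0 ?add1n.
rewrite /PX big_cons fE mulrC; apply: dvdp_mul => //; exact: IH.
Qed.

Lemma dvd_deriv_pow (x : R) c p :
  ('X - x%:P) ^+ c.+1 %| p -> ('X - x%:P) ^+ c %| p^`().
Proof.
case/dvdpP => q ->; rewrite derivM deriv_exp derivXsubC mul1r /=.
apply: dvdp_add; first by rewrite exprS mulrA dvdp_mull.
by rewrite -mulr_natl; apply: dvdp_mull; apply: dvdp_mulIr.
Qed.

Lemma choose_seq (P : nat -> R -> Prop) m :
  (forall i, (i < m)%N -> exists x, P i x) ->
  exists s : seq R, size s = m /\ forall i, (i < m)%N -> P i (nth 0 s i).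
Proof.
elim: m => [|m IH] h; first by exists [::].
have [s [hs hP]] : exists s : seq R, size s = m /\ forall i, (i < m)%N -> P i (nth 0 s i).
  by apply: IH => i lt; apply: h; apply: ltn_trans lt _.
have [x Px] := h m (ltnSn m).
exists (rcons s x); rewrite size_rcons hs; split => // i; rewrite ltnS leq_eqVlt.
case/orP => [/eqP ->|lt]; first by rewrite nth_rcons hs ltnn eqxx.
by rewrite nth_rcons hs lt; apply: hP.
Qed.

Lemma perm_undup_ex (r : seq R) : exists r0, perm_eq r (undup r ++ r0).
Proof.
elim: r => [|x s [s0 hs]]; first by exists [::].
case: (boolP (x \in s)) => xs /=.
  exists (x :: s0); rewrite xs -cat1s perm_sym -cat1s perm_catCA perm_cons perm_sym.
  by [].
by exists s0; rewrite (negbTE xs) /= perm_cons.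
Qed.


Lemma Dsplit r : exists (c : R) r', (PX r)^`() = c *: PX r'.
Proof.
have [->|rN] := eqVneq r [::].
  by exists 0, [::]; rewrite /PX big_nil derivC scale0r.
set p := PX r.
set V := sort <=%O (undup r).
have Vu : uniq V by rewrite sort_uniq undup_uniq.
have Vle : sorted <=%O V := sort_le_sorted _.
have Vlt : sorted <%O V by rewrite lt_sorted_uniq_le Vu Vle.
have memV y : (y \in V) = (y \in r) by rewrite mem_sort mem_undup.
have sV : size V = size (undup r) by rewrite size_sort.
set d := size V.
have d0 : (0 < d)%N.
  have [x0 x0r] : exists x0, x0 \in r.
    by case: (r) rN => // x0 r1 _; exists x0; rewrite mem_head.
  rewrite lt0n size_eq0; apply/eqP => V0; have := memV x0.
  by rewrite V0 in_nil x0r.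
have pN0 : p != 0 by apply: PX_neq0.
have sp' : size p^`() = size r by rewrite size_deriv /p /PX size_prod_XsubC.
have p'N0 : p^`() != 0.
  by rewrite -size_poly_gt0 sp' lt0n size_eq0.
have rootV i : (i < d)%N -> p.[V`_i] = 0.
  move=> id; apply/rootP; rewrite /p /PX root_prod_XsubC -memV.
  exact: mem_nth.
have hroll : forall i, (i < d.-1)%N -> exists w,
    [&& V`_i < w, w < V`_i.+1 & root p^`() w].
  move=> i id.
  have id1 : (i.+1 < d)%N by rewrite -ltn_predRL.
  have id0 : (i < d)%N by apply: ltn_trans id1.
  have hlt : V`_i < V`_i.+1 by rewrite (lt_sorted_ltn_nth 0 Vlt) ?inE.
  have [w] := poly_rolle hlt (etrans (rootV i id0) (esym (rootV i.+1 id1))).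
  rewrite in_itv /= => /andP[h1 h2] h3.
  by exists w; rewrite h1 h2 /root h3 eqxx.
have [W [sW hW]] := @choose_seq (fun i w => [&& V`_i < w, w < V`_i.+1 & root p^`() w]) _ hroll.
have WnotV : forall w, w \in W -> w \notin r.
  move=> w /(nthP 0) [i iW <-]; rewrite -memV; apply/negP => /(nthP 0) [j jd Vj].
  rewrite sW in iW; have /and3P[h1 h2 _] := hW i iW.
  have id1 : (i.+1 < d)%N by rewrite -ltn_predRL.
  have id0 : (i < d)%N by apply: ltn_trans id1.
  rewrite -Vj (lt_sorted_ltn_nth 0 Vlt) ?inE // in h1.
  rewrite -Vj (lt_sorted_ltn_nth 0 Vlt) ?inE // in h2.
  by move: h2; rewrite ltnS leqNgt h1.
have Wu : uniq W.
  apply/(uniqP 0) => i j; rewrite !inE sW => iW jW Wij.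
  have hlt : forall a b, (a < d.-1)%N -> (b < d.-1)%N -> (a < b)%N ->
      W`_a < W`_b.
    move=> a b ad bd ab.
    have /and3P[_ h2 _] := hW a ad; have /and3P[h1 _ _] := hW b bd.
    have bd1 : (b < d)%N by apply: leq_trans bd (leq_pred _).
    have ad1 : (a.+1 < d)%N by rewrite -ltn_predRL.
    apply: (lt_le_trans h2); apply: (le_trans _ (ltW h1)).
    by rewrite (le_sorted_leq_nth 0 Vle) ?inE.
  case: (ltngtP i j) => // ij.
    by have := hlt _ _ iW jW ij; rewrite Wij ltxx.
  by have := hlt _ _ jW iW ij; rewrite Wij ltxx.
have [r0 hr0] := perm_undup_ex r.
have cr y : count_mem y r = ((y \in r) + count_mem y r0)%N.
  by rewrite (permP hr0) count_cat count_uniq_mem ?undup_uniq // mem_undup.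
have hdv : PX (r0 ++ W) %| p^`().
  apply: dvd_count => // y; rewrite count_cat.
  case: (boolP (y \in r)) => yr.
    have -> : count_mem y W = 0%N.
      by apply/count_memPn/negP => /WnotV; rewrite yr.
    have := cr y; rewrite yr addn0 add1n => hc.
    rewrite mup_geq //; apply: dvd_deriv_pow; rewrite -hc -mup_geq //.
    by rewrite /p /PX mu_prod_XsubC.
  have -> : count_mem y r0 = 0%N.
    by have := cr y; rewrite (negbTE yr) add0n => <-; apply/count_memPn.
  rewrite add0n count_uniq_mem //; case: (boolP (y \in W)) => // yW.
  rewrite -XsubC_dvd // dvdp_XsubCl.
  by move: yW => /(nthP 0) [i iW <-]; rewrite sW in iW; case/and3P: (hW i iW).
case/dvdpP: hdv => g hg.
have gN0 : g != 0 by apply: contraNneq p'N0 => g0; rewrite hg g0 mul0r.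
have sr : size r = (d + size r0)%N by rewrite (perm_size hr0) size_cat /d sV.
have : size g = 1%N.
  move: (sp'); rewrite hg size_mul ?PX_neq0 // /PX size_prod_XsubC size_cat sW sr.
  clear -d0; move: (size g) (size r0) d0; clear; move=> a b; lia.
move/eqP/size_poly1P => [c _ gc].
by exists c, (r0 ++ W); rewrite hg gc mul_polyC.
Qed.


End PolyPart.

Arguments PX {R} r. Arguments splitp {R} p. Arguments Dsplit {R} r.
Section P2.
Variable R : realType.
Implicit Types (p q : {poly R}) (r : seq R).
Lemma split_mul p q : splitp p -> splitp q -> splitp (p * q).
Proof.
move=> [c1 [r1 ->]] [c2 [r2 ->]]; exists (c1 * c2), (r1 ++ r2).
by rewrite -scalerAl -scalerAr scalerA /PX big_cat.
Qed.

Lemma split_deriv p : splitp p -> splitp p^`().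
Proof.
move=> [c [r ->]]; have [c' [r' h]] := Dsplit r.
by exists (c * c'), r'; rewrite derivZ h scalerA.
Qed.

Lemma coefMXsubC' (a : R) q i :
  (('X - a%:P) * q)`_i = (if i == 0%N then 0 else q`_i.-1) - a * q`_i.
Proof. by rewrite mulrBl coefB coefXM coefCM. Qed.

Lemma newton0_PX r : 2 * (PX r)`_0 * (PX r)`_2 <= (PX r)`_1 ^+ 2.
Proof.
elim: r => [|a r IH].
  by rewrite /PX big_nil !coefC /= mulr0 expr0n /= ?lexx.
rewrite /PX big_cons -/(PX r) !coefMXsubC' /=.
set x0 := (PX r)`_0 in IH *; set x1 := (PX r)`_1 in IH *; set x2 := (PX r)`_2 in IH *.
rewrite -subr_ge0.
have -> : (x0 - a * x1) ^+ 2 - 2 * (0 - a * x0) * (x1 - a * x2) =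
   x0 ^+ 2 + a ^+ 2 * (x1 ^+ 2 - 2 * x0 * x2) by ring.
by apply: addr_ge0; [apply: sqr_ge0 | apply: mulr_ge0; [apply: sqr_ge0|rewrite subr_ge0]].
Qed.

Lemma newton0 p : splitp p -> 2 * p`_0 * p`_2 <= p`_1 ^+ 2.
Proof.
move=> [c [r ->]]; rewrite !coefZ.
have := newton0_PX r; rewrite -subr_ge0 => H; rewrite -subr_ge0.
have -> : (c * (PX r)`_1) ^+ 2 - 2 * (c * (PX r)`_0) * (c * (PX r)`_2) =
  c ^+ 2 * ((PX r)`_1 ^+ 2 - 2 * (PX r)`_0 * (PX r)`_2) by ring.
by apply: mulr_ge0 => //; apply: sqr_ge0.
Qed.

Lemma newtonC j p : splitp p ->
  (j.+2)%:R * p`_j * p`_j.+2 <= (j.+1)%:R * p`_j.+1 ^+ 2.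
Proof.
elim: j p => [|j IH] p sp; first by rewrite mul1r; exact: newton0.
have H := IH _ (split_deriv _ sp); rewrite !coef_deriv in H.
move: H.
set a := p`_j.+1; set b := p`_j.+2; set c := p`_j.+3.
set m := (j%:R : R).
have m0 : 0 <= m by rewrite /m ler0n.
move=> H.
have E : j.+2%:R * (a *+ j.+1) * (c *+ j.+3) - j.+1%:R * (b *+ j.+2) ^+ 2 =
   ((1 + m) * (2 + m)) * ((3 + m) * a * c - (2 + m) * b ^+ 2).
  by rewrite /m; ring.
have : ((1 + m) * (2 + m)) * ((3 + m) * a * c - (2 + m) * b ^+ 2) <= 0.
  by rewrite -E subr_le0.
rewrite pmulr_rle0; last by apply: mulr_gt0; lra.
have -> : j.+3%:R = 3 + m by rewrite /m; ring.
have -> : j.+2%:R = 2 + m by rewrite /m; ring.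
by rewrite subr_le0.
Qed.

Lemma newtonW j p : splitp p -> p`_j * p`_j.+2 <= p`_j.+1 ^+ 2.
Proof.
move=> sp; have := newtonC j _ sp.
move: (sqr_ge0 p`_j.+1); set X := p`_j * p`_j.+2; set Y := p`_j.+1 ^+ 2 => Y0.
rewrite -mulrA => H.
case: (lerP X 0) => hX; first exact: le_trans hX Y0.
have h1 : j.+1%:R * X <= j.+1%:R * Y.
  apply: le_trans H; apply: ler_wpM2r; first exact: ltW.
  by rewrite ler_nat.
by rewrite ler_pM2l ?ltr0Sn in h1.
Qed.

End P2.

From mathcomp Require Import fintype finset.

Section SetPart.
Variables (R : realType) (n : nat) (kappa : 'I_n -> R).
Implicit Types (S T A B : {set 'I_n}).

Definition e (m : nat) S : R := esym_on (Posz m) kappa S.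
Definition Q S : {poly R} := \prod_(j in S) (1 + kappa j *: 'X).

Lemma e0 S : e 0 S = 1.
Proof.
rewrite /e /esym_on (big_pred1 finset.set0) ?big_set0 // => A /=.
rewrite cards_eq0; have [->|_] := eqVneq A finset.set0; by rewrite ?finset.sub0set ?andbF ?eqxx.
Qed.

Lemma eS0 m : e m.+1 finset.set0 = 0.
Proof.
rewrite /e /esym_on big_pred0 // => A; rewrite finset.subset0.
by have [->|_] := eqVneq A finset.set0; rewrite ?cards0 ?andbF.
Qed.

Lemma subU1_notin x S A : x \notin A -> (A \subset x |: S) = (A \subset S).
Proof.
move=> xA; apply/subsetP/subsetP => h y yA.
  by have := h y yA; rewrite in_setU1; case: eqP => // yx; rewrite -yx yA in xA.
by rewrite in_setU1 h ?orbT.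
Qed.

Lemma R1 x S m : x \notin S -> e m.+1 (x |: S) = kappa x * e m S + e m.+1 S.
Proof.
move=> xS; rewrite /e /esym_on (bigID (fun A => x \in A)) /=; congr (_ + _).
  rewrite big_distrr /=.
  rewrite (reindex_onto (fun B => x |: B) (fun A => A :\ x)) /=; last first.
    by move=> A /andP[_ xA]; rewrite setD1K.
  apply: eq_big => B.
    case: (boolP (x \in B)) => xB.
      have -> : x |: B = B by apply/setUidPr; rewrite sub1set.
      have -> : (B :\ x == B) = false.
        by apply/negbTE; apply/eqP => /setP /(_ x); rewrite !inE xB eqxx.
      rewrite !andbF; apply/esym/negbTE; apply/negP => /andP[/subsetP h _].
      by have := h x xB; rewrite (negbTE xS).
    rewrite setU1K // eqxx andbT setU11 andbT cardsU1 xB add1n eqSS.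
    by rewrite subUset sub1set setU11 /= subU1_notin.
  move=> /andP[/andP[_ _] /eqP hB].
  have xB : x \notin B by rewrite -hB setD11.
  by rewrite big_setU1.
apply: eq_bigl => A; case: (boolP (x \in A)) => xA; rewrite ?andbF ?andbT;
  last by rewrite subU1_notin.
apply/esym/negbTE/negP => /andP[/subsetP h _].
by have := h x xA; rewrite (negbTE xS).
Qed.

Lemma set_ind (P : {set 'I_n} -> Prop) : P finset.set0 ->
  (forall x S, x \notin S -> P S -> P (x |: S)) -> forall S, P S.
Proof.
move=> h0 hS S; move: {2}#|S| (erefl #|S|) => c; elim: c S => [|c IH] S hc.
  by move/eqP: hc; rewrite cards_eq0 => /eqP ->.
have [S0|[x xS]] := set_0Vmem S; first by rewrite S0 cards0 in hc.
rewrite -(setD1K xS); apply: hS; first by rewrite setD11.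
by apply: IH; move: hc; rewrite (cardsD1 x) xS add1n => -[].
Qed.

Lemma coefQ S m : (Q S)`_m = e m S.
Proof.
elim/set_ind: S m => [|x S xS IH] m.
  rewrite /Q big_set0 coef1; case: m => [|m]; first by rewrite e0.
  by rewrite eS0.
rewrite /Q big_setU1 //= -/(Q S) mulrDl mul1r -scalerAl coefD coefZ coefXM.
case: m => [|m]; first by rewrite !e0 IH e0 mulr0 addr0.
by rewrite R1 // !IH addrC.
Qed.

Lemma splitQ S : splitp (Q S).
Proof.
rewrite /Q; apply: big_ind.
- by exists 1, [::]; rewrite /PX big_nil scale1r.
- by move=> p q; apply: split_mul.
move=> j _; have [->|k0] := eqVneq (kappa j) 0.
  by exists 1, [::]; rewrite /PX big_nil scale0r addr0 scale1r.
exists (kappa j), [:: - (kappa j)^-1]; rewrite /PX big_seq1.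
rewrite scalerBr -!mul_polyC -polyCM mulrN mulfV // polyCN opprK addrC.
by rewrite mul_polyC.
Qed.

Lemma newtonE S m : e m S * e m.+2 S <= e m.+1 S ^+ 2.
Proof. by rewrite -!coefQ; apply: newtonW; apply: splitQ. Qed.

Lemma F1 k : forall S j, j \in S -> (forall m, (0 < m <= k.+1)%N -> 0 < e m S) ->
  0 < e k (S :\ j).
Proof.
elim: k => [|k IH] S j jS h; first by rewrite e0 ltr01.
set T := S :\ j.
have jT : j \notin T by rewrite setD11.
have SE : S = j |: T by rewrite setD1K.
have A0 : 0 < e k T.
  by apply: IH => // m /andP[m0 mk]; apply: h; rewrite m0 /= (leq_trans mk).
rewrite ltNge; apply/negP => hu.
have h1 : 0 < e k.+1 S by apply: (h k.+1); lia.
have h2 : 0 < e k.+2 S by apply: (h k.+2); lia.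
rewrite SE R1 // in h1; rewrite SE R1 // in h2.
have N := newtonE T k.
move: h1 h2 N hu A0; set A := e k T; set B := e k.+2 T; set C := e k.+1 T.
set x := kappa j => h1 h2 N hu A0.
have i1 : A * (- (x * C)) < A * B by rewrite ltr_pM2l //; lra.
have i2 : C ^+ 2 <= A * (- (x * C)).
  have -> : A * (- (x * C)) = (x * A) * (- C) by ring.
  rewrite expr2 -mulrNN; apply: ler_wpM2r; lra.
by have := le_lt_trans i2 i1; rewrite ltNge N.
Qed.

Lemma setU1D1 x S j : x \notin S -> j \in S -> (x |: S) :\ j = x |: (S :\ j).
Proof.
move=> xS jS; apply/setP => y; rewrite !inE.
case: (eqVneq y j) => [->|yj] //=; rewrite orbF; apply/esym/negbTE/eqP => jx.
by rewrite -jx jS in xS.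
Qed.

Lemma sum_kappa S m :
  \sum_(j in S) kappa j * e m (S :\ j) = m.+1%:R * e m.+1 S.
Proof.
elim/set_ind: S m => [|x S xS IH] m.
  by rewrite big_set0 eS0 mulr0.
rewrite big_setU1 //= setU1K //.
under eq_bigr => j jS do rewrite setU1D1 //.
case: m => [|m].
  have IH0 : \sum_(j in S) kappa j = e 1 S.
    by have := IH 0%N; rewrite mul1r => <-; apply: eq_bigr => j _; rewrite e0 mulr1.
  under eq_bigr => j jS do rewrite e0 mulr1.
  by rewrite IH0 R1 // !e0; ring.
have xSj : forall j, x \notin S :\ j by move=> j; rewrite in_setD1 negb_and xS orbT.
under eq_bigr => j jS do rewrite (R1 _ _ _ (xSj j)) mulrDr mulrCA.
rewrite big_split /= -mulr_sumr IH IH R1 //; ring.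
Qed.

Lemma sum_one S m :
  \sum_(j in S) e m (S :\ j) = (#|S|%:R - m%:R) * e m S.
Proof.
elim/set_ind: S m => [|x S xS IH] m.
  by rewrite big_set0 cards0; case: m => [|m]; rewrite ?e0 ?eS0; ring.
rewrite big_setU1 //= setU1K // cardsU1 xS add1n.
under eq_bigr => j jS do rewrite setU1D1 //.
case: m => [|m].
  under eq_bigr => j jS do rewrite e0.
  by rewrite sumr_const !e0; ring.
have xSj : forall j, x \notin S :\ j by move=> j; rewrite in_setD1 negb_and xS orbT.
under eq_bigr => j jS do rewrite (R1 _ _ _ (xSj j)).
rewrite big_split /= -mulr_sumr IH IH R1 //; ring.
Qed.

End SetPart.

Section Final.
Variable R : realType.

Lemma exp_shift (x t : R) : expR x * (1 + t) <= expR (x + t).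
Proof. by rewrite expRD ler_wpM2l ?expR_ge1Dx // ltW // expR_gt0. Qed.

Lemma key_ineq (K M xi xl : R) : 1 <= K -> 3 * K <= M -> xl <= M ->
  K * (- xi) <= (K - 1) * M ->
  expR xl <= (2 - (3 * K)^-1) * M * exp_dq xl xi.
Proof.
move=> K1 KM xlM hxi.
set c := (2 - (3 * K)^-1) * M.
have K0 : 0 < K by lra.
have d13 : (3 * K)^-1 <= 1 / 3.
  by rewrite div1r lef_pV2 ?posrE; lra.
have d0 : 0 <= (3 * K)^-1 by rewrite invr_ge0; lra.
have c1 : 1 <= c by rewrite /c; nra.
have El0 := expR_gt0 xl; have Ei0 := expR_gt0 xi.
rewrite /exp_dq; case: eqP => [->|neq]; first by rewrite -[X in X <= _]mul1r ler_wpM2r // ltW.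
set D := (expR xl - expR xi) / (xl - xi).
have hD : D * (xl - xi) = expR xl - expR xi.
  by rewrite /D mulfVK // subr_eq0; apply/eqP.
case: (ltgtP xi xl) => hx; last by move: neq; rewrite hx.
-
  set t := xl - xi.
  have t0 : 0 < t by rewrite /t subr_gt0.
  have ct : 1 + t <= c.
    have h3 : (3 * K) * (1 + t) <= (3 * K) * c.
      rewrite /c /t.
      have -> : 3 * K * ((2 - (3 * K)^-1) * M) = (6 * K - 1) * M.
        by field; lra.
      nra.
    by rewrite ler_pM2l in h3; lra.
  have hE : expR xi * (1 + t) <= expR xl.
    by have := exp_shift xi t; have -> : xi + t = xl by rewrite /t; ring.
  rewrite -(ler_pM2r t0) -mulrA /t hD -/t.
  have hge : 0 <= expR xl - expR xi by have := mulr_gt0 Ei0 t0; lra.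
  have : (1 + t) * (expR xl - expR xi) <= c * (expR xl - expR xi).
    by apply: ler_wpM2r.
  nra.
-
  set t := xi - xl.
  have t0 : 0 < t by rewrite /t subr_gt0.
  have hE : expR xl * (1 + t) <= expR xi.
    by have := exp_shift xl t; have -> : xl + t = xi by rewrite /t; ring.
  have hD' : D * t = expR xi - expR xl.
    by rewrite /t -opprB mulrN hD opprB.
  have DE : expR xl <= D.
    by rewrite -(ler_pM2r t0) hD'; nra.
  apply: (le_trans DE); rewrite -[X in X <= _]mul1r; apply: ler_wpM2r => //; lra.
Qed.


Lemma exp_dq_mul (x y : R) : exp_dq x y * (x - y) = expR x - expR y.
Proof.
rewrite /exp_dq; case: eqP => [->|neq]; first by rewrite !subrr mulr0.
by rewrite mulfVK // subr_eq0; apply/eqP.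
Qed.

Lemma final_ineq (K M xi xl a b : R) : 1 <= K -> 3 * K <= M -> xl <= M ->
  K * (- xi) <= (K - 1) * M -> 0 <= a -> 0 < xl * a + b ->
  expR xl / M * (xl * a + b) <=
  (2 - (3 * K)^-1) * expR xl * a + (2 - (3 * K)^-1) * exp_dq xl xi * (xi * a + b).
Proof.
move=> K1 KM xlM hxi a0 S0.
have key := @key_ineq K M xi xl K1 KM xlM hxi.
move: key; set c := 2 - (3 * K)^-1; set D := exp_dq xl xi => key.
have hD : D * (xl - xi) = expR xl - expR xi by apply: exp_dq_mul.
have K0 : 0 < K by lra.
have M0 : 0 < M by lra.
have d0 : 0 <= (3 * K)^-1 by rewrite invr_ge0; lra.
have d13 : (3 * K)^-1 <= 1 / 3 by rewrite div1r lef_pV2 ?posrE; lra.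
have c0 : 0 < c by rewrite /c; lra.
set S := xl * a + b in S0 *.
have E : c * expR xl * a + c * D * (xi * a + b) = c * expR xi * a + c * D * S.
  have : D * (xi * a + b) = D * S - (expR xl - expR xi) * a by rewrite -hD /S; ring.
  move=> h; rewrite -[c * D * (xi * a + b)]mulrA h; ring.
rewrite E.
have h1 : 0 <= c * expR xi * a by apply: mulr_ge0 => //; apply: mulr_ge0; [lra|exact: ltW (expR_gt0 _)].
have h2 : expR xl / M <= c * D by rewrite ler_pdivrMr // mulrAC.
have h3 : expR xl / M * S <= c * D * S by rewrite ler_pM2r.
lra.
Qed.

End Final.

Arguments e {R n} kappa m S.
Arguments e0 {R n} kappa S.
Arguments R1 {R n} kappa x S m.
Arguments F1 {R n} kappa k S j.
Arguments sum_kappa {R n} kappa S m.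
Arguments sum_one {R n} kappa S m.

Lemma split_sig (R : realType) n (kappa : 'I_n -> R) k' i l : i != l ->
  sigma1 (k'.+1%:Z - 1) kappa i =
  kappa l * sigma2 (k'.+1%:Z - 2) kappa i l + e kappa k' (~: [set i; l]).
Proof.
move=> il.
have -> : k'.+1%:Z - 1 = k'%:Z by rewrite -addn1 PoszD addrK.
rewrite /sigma1 /sigma2 -/(e kappa k' _).
case: k' => [|k''].
  have -> : (1%:Z - 2) = Negz 0 by [].
  by rewrite /esym_on !e0 mulr0 add0r.
have -> : k''.+2%:Z - 2 = k''%:Z by rewrite -addn2 PoszD addrK.
rewrite -/(e kappa k'' _) -R1; last by rewrite !inE eqxx orbT.
congr (e _ _ _); apply/setP => z; rewrite !inE.
by case: (eqVneq z l) => [->|]; rewrite ?orbT ?orbF //= eq_sym (negbTE il).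
Qed.

Theorem lemma3p1 (R : realType) (n k : nat) :
  (1 <= k)%N -> (k <= n)%N -> (n < 2 * k)%N ->
  exists M0 : R,
    forall (kappa : 'I_n -> R) (i1 : 'I_n),
      in_Gamma k kappa ->
      (forall j : 'I_n, kappa j <= kappa i1) ->
      M0 <= kappa i1 ->
      forall i l : 'I_n, i != l ->
        let delta := ((3 * k)%:R)^-1 : R in
        (2 - delta) * expR (kappa l) * sigma2 (k%:Z - 2) kappa i l
        + (2 - delta) * exp_dq (kappa l) (kappa i) * sigma1 (k%:Z - 1) kappa l
        >= expR (kappa l) / kappa i1 * sigma1 (k%:Z - 1) kappa i.
Proof.
move=> hk1 hkn hn2; exists ((3 * k)%:R).
move=> kappa i1 hG hmax hM i l il; cbv zeta.
have [k' kE] : exists k', k = k'.+1 by exists k.-1; rewrite prednK.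
subst k.
set M := kappa i1 in hmax hM *.
set K : R := k'.+1%:R.
have K1 : 1 <= K by rewrite /K ler1n.
have K0 : 0 < K by lra.
have hG' : forall m, (0 < m <= k'.+1)%N -> 0 < e kappa m setT.
  by move=> m hm; apply: hG.
have TE : [set~ i] = setT :\ i by rewrite setTD.
have hSi : 0 < e kappa k' [set~ i].
  by rewrite TE; apply: F1 => //; rewrite in_setT.
have hT : forall m, (0 < m <= k')%N -> 0 < e kappa m [set~ i].
  move=> m /andP[m0 mk]; rewrite TE; apply: F1; first by rewrite in_setT.
  by move=> m' /andP[m'0 m'k]; apply: hG'; rewrite m'0 /=; lia.
have M3 : 3 * K <= M by move: hM; rewrite natrM.
have M0 : 0 <= M by lra.
have ha : 0 <= sigma2 (k'.+1%:Z - 2) kappa i l.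
  clear -hT il; case: k' hT => [|k''] hT.
    by have -> : (1%:Z - 2) = Negz 0 by []; rewrite /sigma2 /esym_on.
  have -> : k''.+2%:Z - 2 = k''%:Z by rewrite -addn2 PoszD addrK.
  rewrite /sigma2 -/(e kappa k'' _).
  have -> : ~: [set i; l] = [set~ i] :\ l.
    by apply/setP => z; rewrite !inE negb_or andbC.
  apply: ltW; apply: F1; first by rewrite !inE eq_sym.
  by move=> m hm; apply: hT.
have hB : K * (- kappa i) <= (n%:R - K) * M.
  set T := [set~ i].
  have iT : i \notin T by rewrite !inE eqxx.
  have TE' : setT = i |: T.
    by apply/setP => z; rewrite !inE; case: (eqVneq z i).
  have h1 : 0 < e kappa k'.+1 setT by apply: hG'; rewrite /= ltnS leqnn.
  rewrite TE' R1 // in h1.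
  have nK : 0 <= n%:R - K by rewrite subr_ge0 /K ler_nat.
  case: (lerP (e kappa k'.+1 T) 0) => hT0.
    have ki : 0 < kappa i.
      by rewrite -(pmulr_lgt0 _ hSi); lra.
    have := mulr_gt0 K0 ki; have := mulr_ge0 nK M0; lra.
  have hTk : forall m, (0 < m <= k'.+1)%N -> 0 < e kappa m T.
    move=> m /andP[m0]; rewrite leq_eqVlt => /orP[/eqP -> //|].
    by rewrite ltnS => mk; apply: hT; rewrite m0.
  have hj : forall j, j \in T -> 0 < e kappa k' (T :\ j).
    by move=> j jT; apply: F1.
  have sk := sum_kappa kappa T k'.
  have so := sum_one kappa T k'.
  have le1 : \sum_(j in T) kappa j * e kappa k' (T :\ j) <=
             \sum_(j in T) M * e kappa k' (T :\ j).
    apply: ler_sum => j jT; apply: ler_wpM2r; last exact: hmax.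
    exact: ltW (hj j jT).
  rewrite -mulr_sumr so sk in le1.
  have cT : #|T| = n.-1 by rewrite cardsC1 card_ord.
  have n0 : (0 < n)%N := leq_ltn_trans (leq0n _) (ltn_ord i).
  have nE : (#|T|%:R - k'%:R : R) = n%:R - K.
    by rewrite cT /K; case: (n) n0 => // n' _; rewrite /=; ring.
  rewrite nE in le1.
  have h1K := mulr_gt0 K0 h1.
  rewrite -(ler_pM2r hSi).
  rewrite -/K in le1.
  lra.
have hB' : K * (- kappa i) <= (K - 1) * M.
  apply: (le_trans hB); apply: ler_wpM2r => //.
  have : (n <= 2 * k'.+1 - 1)%N by lia.
  rewrite -(ler_nat R); move=> h; rewrite /K.
  have : ((2 * k'.+1 - 1)%N%:R : R) = 2 * k'.+1%:R - 1.
    by rewrite natrB ?natrM //; lia.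
  lra.
have li : l != i by rewrite eq_sym.
rewrite (split_sig _ _ _ _ _ _ il) (split_sig _ _ _ _ _ _ li).
have -> : sigma2 (k'.+1%:Z - 2) kappa l i = sigma2 (k'.+1%:Z - 2) kappa i l.
  by rewrite /sigma2 setUC.
have -> : ~: [set l; i] = ~: [set i; l] by rewrite setUC.
rewrite natrM -/K.
apply: final_ineq; [done|done|exact: hmax|done|done|].
rewrite -(split_sig _ _ _ _ _ _ il).
have -> : k'.+1%:Z - 1 = k'%:Z by rewrite -addn1 PoszD addrK.
exact: hSi.
Qed.
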